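(* Let $4\le q<\omega$ and let $\mathbf{A}$ be a Monk algebra obtained from $\mathbf{E}^{23}_q$ by splitting. Let $\mathbf{E}$ be any subalgebra of $\mathbf{E}^{23}_q$. Then $\mathbf{A}$ is a special extension of $\mathbf{E}$, i.e., for all diversity atoms $a,b,c$ of $\mathbf{E}$: (1) if not $a=b=c$ and $a;b\ge c$, then $x;y\ge c$ whenever $x,y$ are atoms of $\mathbf{A}$ with $x\le a$ and $y\le b$; and (2) if $a;a\ge a$, then $x;y\cdot a\ne 0$ whenever $x,y$ are atoms of $\mathbf{A}$ with $x,y\le a$.
   Context: Relation algebras are in the sense of Tarski; $1'$ identity, $0'$ its complement, $;$ relative product, $x^{\smile}$ converse, $\overline{x}$ Boolean complement; integral: $1'$ is an atom; symmetric: $x^{\smile}=x$ for all $x$; a diversity atom is an atom below $0'$. For $4\le q<\omega$, $\mathbf{E}^{23}_q$ is the finite symmetric integral relation algebra with $q$ atoms $e_0=1',e_1,\dots,e_{q-1}$ such that $a;b=0'$ for distinct diversity atoms $a,b$ and $a;a=\overline{a}$ for every diversity atom $a$. For atomic relation algebras $\mathbf{A},\mathbf{B}$, $\mathbf{A}$ is obtained from $\mathbf{B}$ by splitting if $\mathbf{B}\subseteq\mathbf{A}$, every atom $x$ of $\mathbf{A}$ is below an atom $c(x)$ of $\mathbf{B}$, and for all atoms $x,y\le0'$ of $\mathbf{A}$: $x;y=c(x);c(y)\cdot0'$ if $x\ne y^{\smile}$, and $x;y=c(x);c(y)$ if $x=y^{\smile}$. A Monk algebra is an atomic symmetric integral relation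 algebra obtained by splitting from some $\mathbf{E}^{23}_q$, $4\le q<\omega$. *)

(* Defs.v *)
From HB Require Import structures.
From mathcomp Require Import all_boot all_order.
Set Implicit Arguments. Unset Strict Implicit. Unset Printing Implicit Defensive.
Import Order.Theory.
Local Open Scope order_scope.

Section RA.
Variables (disp : Order.disp_t) (T : ctbDistrLatticeType disp).
Variables (comp : T -> T -> T) (conv : T -> T) (ident : T).

Definition is_RA : Prop :=
  (forall x y z, comp (comp x y) z = comp x (comp y z)) /\
  (forall x y z, comp (x `|` y) z = comp x z `|` comp y z) /\
  (forall x, comp x ident = x) /\
  (forall x, conv (conv x) = x) /\
  (forall x y, conv (x `|` y) = conv x `|` conv y) /\
  (forall x y, conv (comp x y) = comp (conv y) (conv x)) /\
  (forall x y, comp (conv x) (~` (comp x y)) <= ~` y).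

Definition diversity : T := ~` ident.

Definition atom (x : T) : Prop :=
  x != \bot /\ forall y, y <= x -> y = \bot \/ y = x.

Definition ra_atomic : Prop := forall x, x != \bot -> exists2 a, atom a & a <= x.
Definition ra_integral : Prop := atom ident.
Definition ra_symmetric : Prop := forall x, conv x = x.

Definition subalgebra (S : T -> Prop) : Prop :=
  S \bot /\ (forall x y, S x -> S y -> S (x `|` y)) /\
  (forall x, S x -> S (~` x)) /\
  (forall x y, S x -> S y -> S (comp x y)) /\
  (forall x, S x -> S (conv x)) /\ S ident.

Definition atom_in (S : T -> Prop) (x : T) : Prop :=
  [/\ S x, x != \bot & forall y, S y -> y <= x -> y = \bot \/ y = x].

Definition is_E23 (q : nat) (S : T -> Prop) : Prop :=
  subalgebra S /\
  (exists s : seq T, forall x, S x -> x \in s) /\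
  (forall x, S x -> conv x = x) /\
  atom_in S ident /\
  (exists2 s : seq T, uniq s /\ size s = q & forall x, atom_in S x <-> x \in s) /\
  (forall a b, atom_in S a -> atom_in S b -> a <= diversity -> b <= diversity ->
         (a != b -> comp a b = diversity) /\ (a = b -> comp a a = ~` a)).

(* the algebra (T, comp, conv, ident) is obtained from its subalgebra B by
   splitting; c(x) is the (unique) atom of B above the atom x *)
Definition split_from (B : T -> Prop) : Prop :=
  subalgebra B /\
  (forall x, atom x -> exists2 c, atom_in B c & x <= c) /\
  (forall x y cx cy, atom x -> atom y -> x <= diversity -> y <= diversity ->
     atom_in B cx -> atom_in B cy -> x <= cx -> y <= cy ->
     (x != conv y -> comp x y = comp cx cy `&` diversity) /\
     (x = conv y -> comp x y = comp cx cy)).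

Definition special_extension (E : T -> Prop) : Prop :=
  forall a b c, atom_in E a -> atom_in E b -> atom_in E c ->
    a <= diversity -> b <= diversity -> c <= diversity ->
    (~ (a = b /\ b = c) -> c <= comp a b ->
       forall x y, atom x -> atom y -> x <= a -> y <= b -> c <= comp x y) /\
    (a <= comp a a ->
       forall x y, atom x -> atom y -> x <= a -> y <= a -> comp x y `&` a != \bot).
End RA.

(* Main.v *)
Require Import Defs.
From HB Require Import structures.
From mathcomp Require Import all_boot all_order.
Import Order.Theory.
Local Open Scope order_scope.
Set Implicit Arguments. Unset Strict Implicit.

Section Aux.
Variables (disp : Order.disp_t) (T : ctbDistrLatticeType disp).
Variables (comp : T -> T -> T) (conv : T -> T) (ident : T).

Lemma S_meet (S : T -> Prop) {x y} : subalgebra comp conv ident S -> S x -> S y -> S (x `&` y).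
Proof.
move=> [_ [HU [HC _]]] Sx Sy.
have := HC _ (HU _ _ (HC _ Sx) (HC _ Sy)).
by rewrite complU !complK.
Qed.

Lemma atom_le (S : T -> Prop) {e a} : subalgebra comp conv ident S -> atom_in S e -> S a ->
  e `&` a != \bot -> e <= a.
Proof.
move=> HS [Se ne He] Sa nz.
have [h|h] := He _ (S_meet HS Se Sa) (leIl _ _).
  by rewrite h eqxx in nz.
by rewrite -h leIr.
Qed.

Lemma atoms_eq (S : T -> Prop) {a b} : subalgebra comp conv ident S -> atom_in S a -> atom_in S b ->
  a `&` b != \bot -> a = b.
Proof.
move=> HS Ha Hb nz; apply/le_anti/andP; split.
  by apply: (atom_le HS Ha) => //; case: Hb.
apply: (atom_le HS Hb); first by case: Ha.
by rewrite meetC.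
Qed.

Lemma meet_nz {x y z : T} : x != \bot -> x <= y -> x <= z -> y `&` z != \bot.
Proof.
move=> nx xy xz; apply/negP => /eqP h.
have : x <= y `&` z by rewrite lexI xy xz.
by rewrite h lex0 (negbTE nx).
Qed.
End Aux.

Theorem lemma1 (q : nat) (disp : Order.disp_t) (T : ctbDistrLatticeType disp)
  (comp : T -> T -> T) (conv : T -> T) (ident : T)
  (B E : T -> Prop) :
  (4 <= q)%N ->
  is_RA comp conv ident ->
  ra_atomic T -> ra_symmetric conv -> ra_integral ident ->
  is_E23 comp conv ident q B ->
  split_from comp conv ident B ->
  subalgebra comp conv ident E -> (forall x, E x -> B x) ->
  special_extension comp ident E.
Proof.
move=> _ _ _ Hsym _ [HB [_ [_ [_ [_ HE23]]]]] [_ [Hc Hsplit]] HE EB.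
have lift : forall x a, atom x -> atom_in E a -> x <= a ->
    exists2 c, atom_in B c & x <= c /\ c <= a.
  move=> x a ax Ea xa; have [c Bc xc] := Hc x ax.
  exists c => //; split => //.
  apply: (atom_le HB Bc); first by apply: EB; case: Ea.
  have nx : x != \bot by case: ax.
  exact: meet_nz nx xc xa.
have ane : forall x : T, atom x -> x != \bot by move=> x; rewrite /atom; case.
have Bne : forall c : T, atom_in B c -> c != \bot by move=> c; case.
move=> a b c Ea Eb Ec ad bd cd; split.
- move=> nabc _ x y ax ay xa yb.
  have [cx Bcx [xcx cxa]] := lift x a ax Ea xa.
  have [cy Bcy [ycy cyb]] := lift y b ay Eb yb.
  have cxd : cx <= diversity ident by apply: le_trans ad.
  have cyd : cy <= diversity ident by apply: le_trans bd.
  have key : cx = cy -> c <= ~` cx.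
    move=> ecc.
    have eab : a = b.
      have cxb : cx <= b by rewrite ecc.
      exact: (atoms_eq HE Ea Eb (meet_nz (Bne _ Bcx) cxa cxb)).
    have nca : c `&` a == \bot.
      apply/negP => /negP h; apply: nabc; split => //.
      by rewrite -eab; symmetry; apply: (atoms_eq HE Ec Ea).
    apply: le_trans (_ : ~` a <= ~` cx); first by rewrite -disj_leC.
    by rewrite leC.
  have [Hne Heq] := Hsplit x y cx cy ax ay (le_trans xcx cxd) (le_trans ycy cyd) Bcx Bcy xcx ycy.
  have [Dne Deq] := HE23 cx cy Bcx Bcy cxd cyd.
  case: (eqVneq x (conv y)) => [exy|nxy].
    have ecc : cx = cy.
      have xcy : x <= cy by move: exy ycy; rewrite Hsym => ->.
      exact: (atoms_eq HB Bcx Bcy (meet_nz (ane _ ax) xcx xcy)).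
    by rewrite (Heq exy) -ecc (Deq ecc) key.
  rewrite (Hne nxy); case: (eqVneq cx cy) => [ecc|ncc].
    by rewrite -ecc (Deq ecc) lexI key // cd.
  by rewrite (Dne ncc) lexI cd.
- move=> aaa x y ax ay xa ya.
  have [cx Bcx [xcx cxa]] := lift x a ax Ea xa.
  have [cy Bcy [ycy cya]] := lift y a ay Ea ya.
  have cxd : cx <= diversity ident by apply: le_trans ad.
  have cyd : cy <= diversity ident by apply: le_trans ad.
  have anz : a != \bot by case: Ea.
  have key : ~` cx `&` a != \bot.
    apply/negP => /eqP h.
    have acx : a <= cx by rewrite -[cx]complK -disj_leC meetC h.
    have eac : a = cx by apply/le_anti; rewrite acx cxa.
    have [_ Deq] := HE23 cx cx Bcx Bcx cxd cxd.
    move: aaa; rewrite eac (Deq erefl) => hh.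
    have : cx <= cx `&` ~` cx by rewrite lexI lexx hh.
    by rewrite meetxC // lex0 (negbTE (Bne _ Bcx)).
  have [Hne Heq] := Hsplit x y cx cy ax ay (le_trans xcx cxd) (le_trans ycy cyd) Bcx Bcy xcx ycy.
  have [Dne Deq] := HE23 cx cy Bcx Bcy cxd cyd.
  case: (eqVneq x (conv y)) => [exy|nxy].
    have ecc : cx = cy.
      have xcy : x <= cy by move: exy ycy; rewrite Hsym => ->.
      exact: (atoms_eq HB Bcx Bcy (meet_nz (ane _ ax) xcx xcy)).
    by rewrite (Heq exy) -ecc (Deq ecc).
  rewrite (Hne nxy); case: (eqVneq cx cy) => [ecc|ncc].
    by rewrite -ecc (Deq ecc) -meetA (meet_idPr ad).
  by rewrite (Dne ncc) meetxx (meet_idPr ad).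
Qed.
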